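(* Let $N\ge 1$ and $p_0,p_1,\ldots,p_{N-1}\in\mathbb{N}$, let $k$ be a nonnegative integer and $x$ a nonnegative integer. Then $$\mathbf{d}_{p_0p_1\cdots p_{N-1}}(k,x)=\sum_{h=0}^{N-1}\mathbf{d}_{p_h}\!\left(k,\ \frac{x}{\left(\prod_{m=0}^{h-1}p_m\right)^{k+1}\left(\prod_{n=h+1}^{N-1}p_n\right)^{k}}\right)\prod_{j=0}^{h-1}p_j ,$$ where empty products equal $1$.
   Context: For an integer $p\ge 2$, an integer $k\ge 0$ and a real number $x\ge 0$, the digit function is $\mathbf{d}_p(k,x)=\lfloor x/p^k\rfloor-p\lfloor x/p^{k+1}\rfloor$ (for integer $x$ this is the $k$-th digit of $x$ in radix $p$); by convention $\mathbf{d}_1(k,x)=0$ for all $k,x$. *)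

(* Defs.v *)
From mathcomp Require Import all_boot all_order all_algebra.
Set Implicit Arguments. Unset Strict Implicit. Unset Printing Implicit Defensive.
Import Order.TTheory GRing.Theory Num.Theory.
Local Open Scope ring_scope.

(* Defined for x in an archimedean field R
   (e.g. the reals); the value for p = 0 is not meaningful (set to 0) and
   is excluded by the hypotheses of the theorem. *)
Definition digit {R : archiNumFieldType} (p k : nat) (x : R) : int :=
  if (2 <= p)%N then
    Num.floor (x / (p%:R ^+ k)) - (p%:Z) * Num.floor (x / (p%:R ^+ k.+1))
  else 0.

(* Main.v *)
Require Import Defs.
From mathcomp Require Import all_boot all_order all_algebra.
From mathcomp Require Import all_classical all_reals.
Import Order.TTheory GRing.Theory Num.Theory.
Local Open Scope ring_scope.
From mathcomp Require Import zify.

Lemma floor_natdiv (R : realType) (a b : nat) : (0 < b)%N ->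
  Num.floor ((a%:R : R) / b%:R) = (a %/ b)%N%:Z.
Proof.
move=> b0; apply: floor_def.
have bR : (0 : R) < b%:R by rewrite ltr0n.
rewrite ler_pdivlMr // ltr_pdivrMr //.
have -> : (a %/ b)%N%:Z + 1 = ((a %/ b).+1)%N%:Z by rewrite -addn1 PoszD.
rewrite !pmulrn -!natrM ler_nat ltr_nat.
apply/andP; split; first by rewrite leq_trunc_div.
by rewrite ltn_ceil.
Qed.
Lemma digit_nat (R : realType) (p k x m : nat) : (0 < p)%N -> (0 < m)%N ->
  digit p k (x%:R / m%:R : R) =
  (x %/ (m * p ^ k))%N%:Z - p%:Z * (x %/ (m * p ^ k.+1))%N%:Z.
Proof.
move=> p0 m0; rewrite /digit; case: ifP => p2.
  rewrite -!mulrA -!invfM -!natrX -!natrM !floor_natdiv //;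
    by rewrite muln_gt0 m0 expn_gt0 p0.
have -> : p = 1%N by lia.
by rewrite !exp1n muln1 mul1r subrr.
Qed.
From mathcomp Require Import ring.
Theorem mainTheorem1 (R : realType) (N : nat) (p : nat -> nat) (k x : nat) :
  (1 <= N)%N ->
  (forall i, (i < N)%N -> (0 < p i)%N) ->
  digit (\prod_(i < N) p i)%N k (x%:R : R) =
  \sum_(h < N)
     digit (p h) k
       ((x%:R : R) / (((\prod_(m < h) p m) ^ k.+1 *
                       (\prod_(h.+1 <= n < N) p n) ^ k)%N)%:R)
     * ((\prod_(j < h) p j)%N)%:Z.
Proof.
move=> N1 pp.
pose P h := (\prod_(0 <= m < h) p m)%N.
have PS h : P h.+1 = (P h * p h)%N by rewrite /P big_nat_recr.
have Ppos h : (h <= N)%N -> (0 < P h)%N.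
  elim: h => [|h IH] hN; first by rewrite /P big_geq.
  by rewrite PS muln_gt0 IH ?pp // ltnW.
have Pord h : (\prod_(m < h) p m)%N = P h by rewrite /P big_mkord.
have PNdec h : (h < N)%N -> P N = (P h * p h * \prod_(h.+1 <= n < N) p n)%N.
  move=> hN; rewrite /P (@big_cat_nat _ _ _ h 0 N) //=; last exact: ltnW.
  by rewrite (@big_ltn _ _ _ h N) // mulnA.
set z := (x %/ P N ^ k)%N.
pose f h := (P h * (z %/ P h))%N%:Z.
have Lx : (x%:R : R) = x%:R / 1%:R by rewrite divr1.
rewrite Pord {1}Lx digit_nat ?Ppos // !mul1n.
have -> : (x %/ P N ^ k.+1)%N = (z %/ P N)%N by rewrite expnSr divnMA.
transitivity (f 0%N - f N).
  have P0 : P 0%N = 1%N by rewrite /P big_geq.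
  by rewrite /f P0 mul1n divn1 PoszM.
rewrite -opprB -(telescope_sumr f (leq0n N)) big_mkord -sumrN.
apply: eq_bigr => [[h hN]] _ /=.
have Qpos : (0 < \prod_(h.+1 <= n < N) p n)%N.
  rewrite big_seq; apply: prodn_cond_gt0 => i; rewrite mem_index_iota => /andP[_ iN]; exact: pp.
rewrite Pord digit_nat; last first.
- by rewrite muln_gt0 !expn_gt0 Qpos Ppos // ltnW.
- exact: pp.
have E1 : (P h ^ k.+1 * (\prod_(h.+1 <= n < N) p n) ^ k * p h ^ k = P N ^ k * P h)%N.
  by rewrite (PNdec h hN) !expnMn expnS; ring.
have E2 : (P h ^ k.+1 * (\prod_(h.+1 <= n < N) p n) ^ k * p h ^ k.+1 = P N ^ k * P h.+1)%N.
  by rewrite (PNdec h hN) PS !expnMn !expnS; ring.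
rewrite E1 E2 !divnMA -/z /f PS !PoszM -divnMA.
set a := (z %/ P h)%N%:Z.
ring.
Qed.
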